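(* Let $K$ be a field, $f\colon R\to S$ a morphism of Zinbiel algebras, $N$ a positive integer, $\Theta_t=\sum_{i=0}^N\theta_it^i$ a deformation of order $N$ of $f$, and $\theta_{N+1}=(m_{R,N+1};m_{S,N+1};f_{N+1})\in C^2_{\mathrm{Zinb}}(f,f)$. Then $\widetilde{\Theta}_t:=\Theta_t+\theta_{N+1}t^{N+1}$ is a deformation of order $N+1$ of $f$ (an order $N+1$ extension of $\Theta_t$) if and only if $\mathrm{Ob}_\Theta=d^2_f\theta_{N+1}$.
   Context: A Zinbiel algebra over $K$ is a $K$-vector space $R$ with bilinear product $x\cdot y$ (also written $m_R(x,y)$) satisfying $(x\cdot y)\cdot z=x\cdot(y\cdot z)+x\cdot(z\cdot y)$. A morphism $f\colon R\to S$ is a linear map with $f(x\cdot y)=f(x)\cdot f(y)$. $R$ is a bimodule over itself, $S$ over itself, and $S$ is an $R$-bimodule via $r\cdot s=f(r)\cdot s$, $s\cdot r=s\cdot f(r)$. For a bimodule $A$ over $R$ and $1\le n\le4$, $C^n_{\mathrm{Zinb}}(R,A)=\mathrm{Hom}_K(R^{\otimes n},A)$ with $(d^1\varphi)(x,y)=x\cdot\varphi(y)-\varphi(x\cdot y)+\varphi(x)\cdot y$, $(d^2\varphi)(x,y,z)=x\cdot(\varphi(y,z)+\varphi(z,y))-\varphi(x\cdot y,z)+\varphi(x,y\cdot z+z\cdot y)-\varphi(x,y)\cdot z$, $(d^3\varphi)(x,y,z,w)=x\cdot\{\varphi(y,z,w)-\varphi(z,w,y)+\varphi(z,y,w)-\varphi(w,z,y)\}-\varphi(x\cdot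 y,z,w)+\varphi(x,y\cdot z+z\cdot y,w)-\varphi(x,y,z\cdot w+w\cdot z)+\varphi(x,y,z)\cdot w$. The deformation complex: $C^0_{\mathrm{Zinb}}(R,S)=0$, $d^0=0$, $C^n_{\mathrm{Zinb}}(f,f)=C^n_{\mathrm{Zinb}}(R,R)\times C^n_{\mathrm{Zinb}}(S,S)\times C^{n-1}_{\mathrm{Zinb}}(R,S)$ ($1\le n\le4$), $d^i_f(\xi;\pi;\varphi)=(d^i\xi;d^i\pi;f\xi-\pi f-d^{i-1}\varphi)$ with $(f\xi)(x_1,\dots)=f(\xi(x_1,\dots))$, $(\pi f)(x_1,\dots)=\pi(f(x_1),\dots)$. For a positive integer $M$, a deformation of order $M$ of $f$ is $\Theta_t=\sum_{i=0}^M\theta_it^i$ with $\theta_0=(m_R;m_S;f)$ (so $m_{R,0}=m_R$, $m_{S,0}=m_S$, $f_0=f$) and $\theta_i=(m_{R,i};m_{S,i};f_i)\in C^2_{\mathrm{Zinb}}(f,f)$, such that for all $0\le n\le M$: for $*=R,S$ and all $x,y,z\in *$, $\sum_{l=0}^n m_{*,l}(m_{*,n-l}(x,y),z)=\sum_{l=0}^n m_{*,l}(x,m_{*,n-l}(y,z)+m_{*,n-l}(z,y))$; and for all $x,y\in R$, $\sum_{i=0}^n f_i(m_{R,n-i}(x,y))=\sum_{i+j+k=n}m_{S,i}(f_j(x),f_k(y))$ (indices $\ge0$). The obstruction class of a deformation $\Theta_t$ of order $N$ is $\mathrm{Ob}_\Theta=(\mathrm{Ob}_R;\mathrm{Ob}_S;\mathrm{Ob}_f)\in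 C^3_{\mathrm{Zinb}}(f,f)$ where, for $*=R,S$ and $x,y,z\in *$, $\mathrm{Ob}_*(x,y,z)=\sum_{i=1}^N m_{*,i}(m_{*,N+1-i}(x,y),z)-\sum_{i=1}^N m_{*,i}(x,m_{*,N+1-i}(y,z)+m_{*,N+1-i}(z,y))$, and for $x,y\in R$, $\mathrm{Ob}_f(x,y)=\sum' m_{S,i}(f_j(x),f_k(y))-\sum_{i=1}^N f_i(m_{R,N+1-i}(x,y))$, where $\sum'$ runs over all triples of integers $i,j,k\ge0$ with $i+j+k=N+1$ and at least two of $i,j,k$ positive (equivalently, $i,j,k\le N$). *)

(* Defs.v *)
From HB Require Import structures.
From mathcomp Require Import all_boot all_order all_algebra.
Set Implicit Arguments. Unset Strict Implicit. Unset Printing Implicit Defensive.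
Import GRing.Theory.
Local Open Scope ring_scope.

Section Zinbiel.
Variable K : fieldType.

Definition is_lin (V W : lmodType K) (g : V -> W) : Prop :=
  forall (a : K) (x y : V), g (a *: x + y) = a *: g x + g y.

Definition is_bilin (V W : lmodType K) (m : V -> V -> W) : Prop :=
  (forall (a : K) (x y z : V), m (a *: x + y) z = a *: m x z + m y z) /\
  (forall (a : K) (x y z : V), m z (a *: x + y) = a *: m z x + m z y).

Definition is_trilin (V W : lmodType K) (m : V -> V -> V -> W) : Prop :=
  (forall (a : K) (x y z w : V), m (a *: x + y) z w = a *: m x z w + m y z w) /\
  (forall (a : K) (x y z w : V), m z (a *: x + y) w = a *: m z x w + m z y w) /\
  (forall (a : K) (x y z w : V), m z w (a *: x + y) = a *: m z w x + m z w y).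

Definition is_zinbiel (V : lmodType K) (m : V -> V -> V) : Prop :=
  is_bilin m /\ forall x y z : V, m (m x y) z = m x (m y z) + m x (m z y).

Definition is_zinb_morph (R S : lmodType K) (mR : R -> R -> R) (mS : S -> S -> S)
  (f : R -> S) : Prop :=
  is_lin f /\ forall x y : R, f (mR x y) = mS (f x) (f y).

(** Coboundaries for a bimodule A over (R, mR) with left action [la] and right
    action [ra]. *)
Definition d1 (R A : lmodType K) (mR : R -> R -> R) (la : R -> A -> A)
  (ra : A -> R -> A) (phi : R -> A) : R -> R -> A :=
  fun x y => la x (phi y) - phi (mR x y) + ra (phi x) y.

Definition d2 (R A : lmodType K) (mR : R -> R -> R) (la : R -> A -> A)
  (ra : A -> R -> A) (phi : R -> R -> A) : R -> R -> R -> A :=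
  fun x y z => la x (phi y z + phi z y) - phi (mR x y) z
               + phi x (mR y z + mR z y) - ra (phi x y) z.

Section Deformation.
Variables (R S : lmodType K).

(** An element (m_R ; m_S ; f) of C^2_Zinb(f,f) =
    C^2(R,R) x C^2(S,S) x C^1(R,S). *)
Record cochain2 := Cochain2 {
  c_mR : R -> R -> R;
  c_mS : S -> S -> S;
  c_f  : R -> S }.

Definition in_C2f (t : cochain2) : Prop :=
  is_bilin (c_mR t) /\ is_bilin (c_mS t) /\ is_lin (c_f t).

(** d^2_f : C^2(f,f) -> C^3(f,f), relative to the base structure (mR, mS, f);
    S is an R-bimodule via f. The result is a triple of functions. *)
Definition d2f (mR : R -> R -> R) (mS : S -> S -> S) (f : R -> S)
  (t : cochain2) :
  (R -> R -> R -> R) * (S -> S -> S -> S) * (R -> R -> S) :=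
  (d2 mR mR mR (c_mR t),
   d2 mS mS mS (c_mS t),
   fun x y => f (c_mR t x y) - c_mS t (f x) (f y)
              - d1 mR (fun r s => mS (f r) s) (fun s r => mS s (f r)) (c_f t) x y).

(** A (formal) family Theta_t = sum_i theta_i t^i is encoded by the sequence
    [Th : nat -> cochain2] of its coefficients; only the indices 0..M matter
    for a deformation of order M. *)
Definition is_deformation (mR : R -> R -> R) (mS : S -> S -> S) (f : R -> S)
  (M : nat) (Th : nat -> cochain2) : Prop :=
  [/\ c_mR (Th 0%N) = mR /\ c_mS (Th 0%N) = mS /\ c_f (Th 0%N) = f,
      (forall i, (i <= M)%N -> in_C2f (Th i)),
      (forall n, (n <= M)%N -> forall x y z : R,
         \sum_(l < n.+1) c_mR (Th l) (c_mR (Th (n - l)%N) x y) z =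
         \sum_(l < n.+1) c_mR (Th l) x (c_mR (Th (n - l)%N) y z
                                        + c_mR (Th (n - l)%N) z y)),
      (forall n, (n <= M)%N -> forall x y z : S,
         \sum_(l < n.+1) c_mS (Th l) (c_mS (Th (n - l)%N) x y) z =
         \sum_(l < n.+1) c_mS (Th l) x (c_mS (Th (n - l)%N) y z
                                        + c_mS (Th (n - l)%N) z y)) &
      (forall n, (n <= M)%N -> forall x y : R,
         \sum_(i < n.+1) c_f (Th i) (c_mR (Th (n - i)%N) x y) =
         \sum_(i < n.+1) \sum_(j < n.+1 | (i + j <= n)%N)
            c_mS (Th i) (c_f (Th j) x) (c_f (Th (n - i - j)%N) y))].

Definition extend (N : nat) (Th : nat -> cochain2) (th : cochain2) :
  nat -> cochain2 :=
  fun i => if i == N.+1 then th else Th i.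

Definition Ob_R (N : nat) (Th : nat -> cochain2) : R -> R -> R -> R :=
  fun x y z =>
    \sum_(1 <= i < N.+1) c_mR (Th i) (c_mR (Th (N.+1 - i)%N) x y) z
    - \sum_(1 <= i < N.+1) c_mR (Th i) x (c_mR (Th (N.+1 - i)%N) y z
                                          + c_mR (Th (N.+1 - i)%N) z y).

Definition Ob_S (N : nat) (Th : nat -> cochain2) : S -> S -> S -> S :=
  fun x y z =>
    \sum_(1 <= i < N.+1) c_mS (Th i) (c_mS (Th (N.+1 - i)%N) x y) z
    - \sum_(1 <= i < N.+1) c_mS (Th i) x (c_mS (Th (N.+1 - i)%N) y z
                                          + c_mS (Th (N.+1 - i)%N) z y).

(** sum' runs over i, j, k >= 0 with i + j + k = N+1 and at least two of
    i, j, k positive (k := N+1-i-j). *)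
Definition Ob_f (N : nat) (Th : nat -> cochain2) : R -> R -> S :=
  fun x y =>
    \sum_(i < N.+2) \sum_(j < N.+2 | (i + j <= N.+1)%N &&
            (1 < (0 < i)%N + (0 < j)%N + (0 < N.+1 - i - j)%N)%N)
        c_mS (Th i) (c_f (Th j) x) (c_f (Th (N.+1 - i - j)%N) y)
    - \sum_(1 <= i < N.+1) c_f (Th i) (c_mR (Th (N.+1 - i)%N) x y).

Definition Ob (N : nat) (Th : nat -> cochain2) :
  (R -> R -> R -> R) * (S -> S -> S -> S) * (R -> R -> S) :=
  (Ob_R N Th, Ob_S N Th, Ob_f N Th).

End Deformation.
End Zinbiel.

(* Main.v *)
Require Import Defs.
From mathcomp Require Import all_boot all_order all_algebra.
From mathcomp Require Import zify.
From Stdlib Require Import FunctionalExtensionality.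
Import GRing.Theory.

Local Open Scope ring_scope.

Lemma grp (V:zmodType) (a b c d s1 s2: V): a + s1 + b = c + s2 + d <-> s1 - s2 = c - b + d - a.
Proof.
have E1 : forall X, (a + s1 + b = X) <-> s1 = X - b - a.
  move=> X; split=> [<-|->]; first by rewrite addrK [a + s1]addrC addrK.
  by rewrite [a + _]addrC !subrK.
have E2 : forall Y, (s1 - s2 = Y) <-> s1 = Y + s2.
  by move=> Y; split=> [<-|->]; rewrite ?subrK ?addrK.
apply: (iff_trans (E1 _)); apply: iff_sym; apply: (iff_trans (E2 _)).
by rewrite [c + s2 + d - b - a](ACl (1*4*3*5*2)).
Qed.

Lemma grpf (V:zmodType) (a b t1 t2 t3 s1 s2: V):
  a + s1 + b = s2 + (t1 + t2 + t3) <-> s2 - s1 = a - t3 - (t1 - b + t2).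
Proof.
have E1 : forall X, (a + s1 + b = X) <-> s1 = X - b - a.
  move=> X; split=> [<-|->]; first by rewrite addrK [a + s1]addrC addrK.
  by rewrite [a + _]addrC !subrK.
have E2 : forall Y, (s2 - s1 = Y) <-> s1 = s2 - Y.
  by move=> Y; split=> [<-|->]; rewrite opprB addrC subrK.
apply: (iff_trans (E1 _)); apply: iff_sym; apply: (iff_trans (E2 _)).
rewrite !opprB.

by rewrite [s2 + (t1 + t2 + t3) - b - a](AC (((1*(2*1))*1)*1) (1*(((2*5)*3)*(4*6)))).
Qed.


Lemma sum_split3 (V : zmodType) N (G : nat -> V) :
  \sum_(l < N.+2) G l = G 0%N + \sum_(1 <= i < N.+1) G i + G N.+1.
Proof. by rewrite -(big_mkord xpredT G) big_nat_recr //= big_ltn. Qed.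

Lemma dsum_split (V : zmodType) N (H : nat -> nat -> V) :
 \sum_(i < N.+2) \sum_(j < N.+2 | (i + j <= N.+1)%N) H i j =
 \sum_(i < N.+2) \sum_(j < N.+2 | (i + j <= N.+1)%N &&
      (1 < (0 < i)%N + (0 < j)%N + (0 < N.+1 - i - j)%N)%N) H i j
 + (H 0%N 0%N + H 0%N N.+1 + H N.+1 0%N).
Proof.
rewrite (eq_bigr (fun i : 'I_N.+2 =>
   \sum_(j < N.+2 | (i + j <= N.+1)%N &&
      (1 < (0 < i)%N + (0 < j)%N + (0 < N.+1 - i - j)%N)%N) H i j +
   \sum_(j < N.+2 | (i + j <= N.+1)%N &&
      ~~ (1 < (0 < i)%N + (0 < j)%N + (0 < N.+1 - i - j)%N)%N) H i j)); last first.
  by move=> i _; rewrite (bigID (fun j : 'I_N.+2 =>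
      (1 < (0 < i)%N + (0 < j)%N + (0 < N.+1 - i - j)%N)%N)).
rewrite big_split /=; congr (_ + _).
rewrite (@sum_split3 _ _ (fun i => \sum_(j < N.+2 | (i + j <= N.+1)%N &&
      ~~ (1 < (0 < i)%N + (0 < j)%N + (0 < N.+1 - i - j)%N)%N) H i j)).
rewrite big_nat [\sum_(1 <= i < N.+1 | _) _]big1 ?addr0; last first.
  move=> i /andP[i1 iN]; rewrite big1 // => j /andP[A nP].
  exfalso; move: nP; case: j A => [[|j] jl] /= A; lia.
rewrite !big_mkcond /=.
rewrite (@sum_split3 _ _ (fun j => if (0 + j <= N.+1)%N &&
      ~~ (1 < (0 < 0)%N + (0 < j)%N + (0 < N.+1 - 0 - j)%N)%N then H 0%N j else 0)).
rewrite [X in _ + X = _]big_mkcond /=.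
rewrite (@sum_split3 _ _ (fun j => if (N.+1 + j <= N.+1)%N &&
      ~~ (1 < 1 + (0 < j)%N + (0 < N.+1 - N.+1 - j)%N)%N then H N.+1 j else 0)).
rewrite !big_nat !big1 ?addr0; first last.
- move=> j /andP[j1 jN]; case: ifP => // h; exfalso; lia.
- move=> j /andP[j1 jN]; case: ifP => // h; exfalso; lia.
rewrite !subn0 subnn !add0n.
rewrite ifT; last lia.
rewrite ifT; last lia.
rewrite ifF; last by apply/negbTE/negP => /andP[h _]; lia.
by rewrite addr0.
Qed.

Theorem theorem5p2 (K : fieldType) (R S : lmodType K)
  (mR : R -> R -> R) (mS : S -> S -> S) (f : R -> S)
  (N : nat) (Th : nat -> cochain2 R S) (th : cochain2 R S) :
  is_zinbiel mR -> is_zinbiel mS -> is_zinb_morph mR mS f ->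
  (0 < N)%N ->
  is_deformation mR mS f N Th ->
  in_C2f th ->
  (is_deformation mR mS f N.+1 (extend N Th th) <-> Ob N Th = d2f mR mS f th).
Proof.
move=> _ _ _ _ [[h0R [h0S h0f]] hC hR hS hF] hth.
set E := extend N Th th.
have EN : E N.+1 = th by rewrite /E /extend eqxx.
have Ele : forall i, (i <= N)%N -> E i = Th i.
  by move=> i hi; rewrite /E /extend; case: eqP => // eq; exfalso; lia.
have E0 : E 0%N = Th 0%N by apply: Ele.
have KR : forall x y z,
  (\sum_(l < N.+2) c_mR (E l) (c_mR (E (N.+1 - l)%N) x y) z =
   \sum_(l < N.+2) c_mR (E l) x (c_mR (E (N.+1 - l)%N) y z + c_mR (E (N.+1 - l)%N) z y))
  <-> Ob_R N Th x y z = d2 mR mR mR (c_mR th) x y z.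
  move=> x y z.
  rewrite (@sum_split3 _ _ (fun l => c_mR (E l) (c_mR (E (N.+1 - l)%N) x y) z)).
  rewrite (@sum_split3 _ _ (fun l => c_mR (E l) x (c_mR (E (N.+1 - l)%N) y z + c_mR (E (N.+1 - l)%N) z y))).
  rewrite subn0 subnn EN E0 h0R.
  rewrite (@eq_big_nat _ _ _ _ _ _ (fun i => c_mR (Th i) (c_mR (Th (N.+1 - i)%N) x y) z)); last first.
    by move=> i /andP[i1 iN] /=; rewrite !Ele //; lia.
  rewrite [in X in _ = X <-> _](@eq_big_nat _ _ _ _ _ _ (fun i => c_mR (Th i) x (c_mR (Th (N.+1 - i)%N) y z + c_mR (Th (N.+1 - i)%N) z y))); last first.
    by move=> i /andP[i1 iN] /=; rewrite !Ele //; lia.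
  exact: grp.
have KS : forall x y z,
  (\sum_(l < N.+2) c_mS (E l) (c_mS (E (N.+1 - l)%N) x y) z =
   \sum_(l < N.+2) c_mS (E l) x (c_mS (E (N.+1 - l)%N) y z + c_mS (E (N.+1 - l)%N) z y))
  <-> Ob_S N Th x y z = d2 mS mS mS (c_mS th) x y z.
  move=> x y z.
  rewrite (@sum_split3 _ _ (fun l => c_mS (E l) (c_mS (E (N.+1 - l)%N) x y) z)).
  rewrite (@sum_split3 _ _ (fun l => c_mS (E l) x (c_mS (E (N.+1 - l)%N) y z + c_mS (E (N.+1 - l)%N) z y))).
  rewrite subn0 subnn EN E0 h0S.
  rewrite (@eq_big_nat _ _ _ _ _ _ (fun i => c_mS (Th i) (c_mS (Th (N.+1 - i)%N) x y) z)); last first.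
    by move=> i /andP[i1 iN] /=; rewrite !Ele //; lia.
  rewrite [in X in _ = X <-> _](@eq_big_nat _ _ _ _ _ _ (fun i => c_mS (Th i) x (c_mS (Th (N.+1 - i)%N) y z + c_mS (Th (N.+1 - i)%N) z y))); last first.
    by move=> i /andP[i1 iN] /=; rewrite !Ele //; lia.
  exact: grp.
have KF : forall x y,
  (\sum_(i < N.+2) c_f (E i) (c_mR (E (N.+1 - i)%N) x y) =
   \sum_(i < N.+2) \sum_(j < N.+2 | (i + j <= N.+1)%N)
       c_mS (E i) (c_f (E j) x) (c_f (E (N.+1 - i - j)%N) y))
  <-> Ob_f N Th x y = (d2f mR mS f th).2 x y.
  move=> x y.
  rewrite (@sum_split3 _ _ (fun i => c_f (E i) (c_mR (E (N.+1 - i)%N) x y))).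
  rewrite (@dsum_split _ _ (fun i j => c_mS (E i) (c_f (E j) x) (c_f (E (N.+1 - i - j)%N) y))) /=.
  rewrite !subn0 !subnn ?sub0n EN E0 h0R h0S h0f.
  rewrite (@eq_big_nat _ _ _ _ _ _ (fun i => c_f (Th i) (c_mR (Th (N.+1 - i)%N) x y))); last first.
    by move=> i /andP[i1 iN] /=; rewrite !Ele //; lia.
  rewrite [in X in _ = X <-> _](eq_bigr (fun i : 'I_N.+2 =>
     \sum_(j < N.+2 | (i + j <= N.+1)%N &&
      (1 < (0 < i)%N + (0 < j)%N + (0 < N.+1 - i - j)%N)%N)
       c_mS (Th i) (c_f (Th j) x) (c_f (Th (N.+1 - i - j)%N) y))); last first.
    move=> i _; apply: eq_bigr => j /andP[A P]; rewrite !Ele //; lia.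
  rewrite /Ob_f /d2f /d1 /=.
  exact: grpf.
split.
  case=> _ _ hR' hS' hF'.
  rewrite /Ob /d2f; congr (_, _, _).
  - apply: functional_extensionality => x; apply: functional_extensionality => y;
    apply: functional_extensionality => z; apply/KR; exact: hR' N.+1 (leqnn _) x y z.
  - apply: functional_extensionality => x; apply: functional_extensionality => y;
    apply: functional_extensionality => z; apply/KS; exact: hS' N.+1 (leqnn _) x y z.
  - apply: functional_extensionality => x; apply: functional_extensionality => y.
    have := (proj1 (KF x y)) (hF' N.+1 (leqnn _) x y); by [].
move=> hOb.
have hOR : forall x y z, Ob_R N Th x y z = d2 mR mR mR (c_mR th) x y z.
  by move=> x y z; rewrite -[Ob_R N Th]/((Ob N Th).1.1) hOb.
have hOS : forall x y z, Ob_S N Th x y z = d2 mS mS mS (c_mS th) x y z.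
  by move=> x y z; rewrite -[Ob_S N Th]/((Ob N Th).1.2) hOb.
have hOF : forall x y, Ob_f N Th x y = (d2f mR mS f th).2 x y.
  by move=> x y; rewrite -[Ob_f N Th]/((Ob N Th).2) hOb.
split.
- by rewrite E0.
- move=> i hi; rewrite /E /extend; case: eqP => [_|ne]; [exact: hth | apply: hC; lia].
- move=> n hn x y z; case: (ltnP n N.+1) => hn'.
  + have EE1 : forall l : 'I_n.+1, E l = Th l by move=> l; apply: Ele; case: l => /= l; lia.
    have EE2 : forall l : 'I_n.+1, E (n - l)%N = Th (n - l)%N by move=> l; apply: Ele; lia.
    under eq_bigr => l _ do rewrite EE1 EE2.
    under [in X in _ = X]eq_bigr => l _ do rewrite EE1 EE2.
    exact: hR.
  + have -> : n = N.+1 by lia.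
    by apply/KR.
- move=> n hn x y z; case: (ltnP n N.+1) => hn'.
  + have EE1 : forall l : 'I_n.+1, E l = Th l by move=> l; apply: Ele; case: l => /= l; lia.
    have EE2 : forall l : 'I_n.+1, E (n - l)%N = Th (n - l)%N by move=> l; apply: Ele; lia.
    under eq_bigr => l _ do rewrite EE1 EE2.
    under [in X in _ = X]eq_bigr => l _ do rewrite EE1 EE2.
    exact: hS.
  + have -> : n = N.+1 by lia.
    by apply/KS.
- move=> n hn x y; case: (ltnP n N.+1) => hn'.
  + have EE1 : forall l : 'I_n.+1, E l = Th l by move=> l; apply: Ele; case: l => /= l; lia.
    have EE2 : forall l : 'I_n.+1, E (n - l)%N = Th (n - l)%N by move=> l; apply: Ele; lia.
    have EE3 : forall l k : 'I_n.+1, E (n - l - k)%N = Th (n - l - k)%N by move=> l k; apply: Ele; lia.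
    under eq_bigr => l _ do rewrite EE1 EE2.
    under [in X in _ = X]eq_bigr => l _ do under eq_bigr => k _ do rewrite EE1 EE1 EE3.
    exact: hF.
  + have -> : n = N.+1 by lia.
    by apply/KF.
Qed.
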